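(* Let $X$ be a Banach lattice of (equivalence classes of) real valued functions on a $\sigma$-finite measure space $(\Omega,\Sigma,\mu)$, with $X\subseteq L_1(\Omega,\Sigma,\mu)+L_\infty(\Omega,\Sigma,\mu)$, and let $T:X\to X$ be a linear operator. Put $\Sigma_T=\{A\subseteq\Omega:\ \exists f\in X \text{ with } \operatorname{supp}(Tf)=A\}$. Then: (1) if $A,B\in\Sigma_T$, then $A\cup B\in\Sigma_T$; (2) if $\{A_j\}_{j\in\mathbb{N}}\subseteq\Sigma_T$ is a family of mutually disjoint sets, then $\bigcup_{j=1}^\infty A_j\in\Sigma_T$.
   Context: For a function $f$, $\operatorname{supp} f$ denotes its support, i.e. the minimal set outside of which $f=0$ a.e. All set relations (equality, inclusion, disjointness) are understood modulo sets of measure zero. *)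

(* Defs.v *)
From HB Require Import structures.
From mathcomp Require Import all_boot all_order all_algebra.
From mathcomp Require Import all_classical all_reals all_analysis.
Set Implicit Arguments. Unset Strict Implicit. Unset Printing Implicit Defensive.
Import Order.TTheory GRing.Theory Num.Theory.
Local Open Scope classical_set_scope.
Local Open Scope ring_scope.

Section Defs.
Context {d : measure_display} {Om : measurableType d} {R : realType}.

(* Elements of X are represented by measurable real functions on Om;
   X is closed under a.e. equality, so it is really a set of equivalence classes. *)

Definition in_L1_plus_Linf (mu : {measure set Om -> \bar R}) (f : Om -> R) : Prop :=
  exists g h : Om -> R,
    [/\ mu.-integrable setT (EFin \o g),
        measurable_fun setT h,
        (exists M : R, {ae mu, forall x, `|h x| <= M})
      & forall x, f x = g x + h x].

Record BanachFunctionLattice (mu : {measure set Om -> \bar R})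
    (X : set (Om -> R)) (nrm : (Om -> R) -> R) : Prop := {
  bfl_meas : forall f, X f -> measurable_fun setT f;
  bfl_ae_closed : forall f g, X f -> measurable_fun setT g ->
      f = g %[ae mu] -> X g;
  bfl_zero : X (fun _ => 0);
  bfl_add : forall f g, X f -> X g -> X (fun x => f x + g x);
  bfl_scale : forall (a : R) f, X f -> X (fun x => a * f x);
  bfl_max : forall f g, X f -> X g -> X (fun x => Num.max (f x) (g x));
  bfl_nrm_ae : forall f g, X f -> X g -> f = g %[ae mu] -> nrm f = nrm g;
  bfl_nrm_triangle : forall f g, X f -> X g ->
      nrm (fun x => f x + g x) <= nrm f + nrm g;
  bfl_nrm_scale : forall (a : R) f, X f -> nrm (fun x => a * f x) = `|a| * nrm f;
  bfl_nrm_def : forall f, X f -> (nrm f = 0 <-> f = (fun _ => 0) %[ae mu]);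
  bfl_nrm_lattice : forall f g, X f -> X g ->
      {ae mu, forall x, `|f x| <= `|g x|} -> nrm f <= nrm g;
  bfl_complete : forall u : nat -> Om -> R, (forall n, X (u n)) ->
      (forall e : R, 0 < e -> exists N, forall m n, (N <= m)%N -> (N <= n)%N ->
          nrm (fun x => u m x - u n x) < e) ->
      exists2 f, X f & forall e : R, 0 < e -> exists N, forall n, (N <= n)%N ->
          nrm (fun x => u n x - f x) < e;
  bfl_L1Linf : forall f, X f -> in_L1_plus_Linf mu f
}.

Definition bounded_linear_op (mu : {measure set Om -> \bar R})
    (X : set (Om -> R)) (nrm : (Om -> R) -> R) (Op : (Om -> R) -> (Om -> R)) : Prop :=
  [/\ forall f, X f -> X (Op f),
      forall f g, X f -> X g -> f = g %[ae mu] -> Op f = Op g %[ae mu],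
      forall f g, X f -> X g -> Op (fun x => f x + g x) = (fun x => Op f x + Op g x) %[ae mu],
      forall (a : R) f, X f -> Op (fun x => a * f x) = (fun x => a * Op f x) %[ae mu]
    & exists C : R, forall f, X f -> nrm (Op f) <= C * nrm f].

Definition ae_set_eq (mu : {measure set Om -> \bar R}) (A B : set Om) : Prop :=
  mu.-negligible ((A `\` B) `|` (B `\` A)).

Definition is_supp (mu : {measure set Om -> \bar R}) (f : Om -> R) (A : set Om) : Prop :=
  ae_set_eq mu A [set x | f x != 0].

Definition SigmaT (mu : {measure set Om -> \bar R}) (X : set (Om -> R))
    (Op : (Om -> R) -> (Om -> R)) : set (set Om) :=
  [set A | exists2 f, X f & is_supp mu (Op f) A].

Definition ae_disjoint (mu : {measure set Om -> \bar R}) (A B : set Om) : Prop :=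
  mu.-negligible (A `&` B).

End Defs.

(* Main.v *)
Require Import Defs.
From HB Require Import structures.
From mathcomp Require Import all_boot all_order all_algebra.
From mathcomp Require Import all_classical all_reals all_analysis.
Import Order.TTheory GRing.Theory Num.Theory.
Local Open Scope classical_set_scope.
Local Open Scope ring_scope.
Import numFieldNormedType.Exports.
Set Implicit Arguments. Unset Strict Implicit. Unset Printing Implicit Defensive.



Lemma notin_countable (R : realType) (S : set R) : countable S -> exists c, ~ S c.
Proof.
move=> cS; apply: contrapT => /forallNP H.
have ST : S = setT by apply/seteqP; split => // x _; apply: contrapT; exact: H.
have := countable_lebesgue_measure0 cS.
have := @lebesgue_measure_itv R `]-oo, +oo[.
rewrite set_itv_infty_infty -ST /= => ->.
by [].
Qed.

Lemma disj_pos_countable d (T : measurableType d) (R : realType)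
  (mu : {measure set T -> \bar R}) (F : set T) (E : R -> set T) :
  measurable F -> (mu F < +oo)%E -> (forall c, measurable (E c)) ->
  (forall c c' x, E c x -> E c' x -> c = c') ->
  countable [set c | (0 < mu (F `&` E c))%E].
Proof.
move=> mF Ffin mE disj.
have mFE c : measurable (F `&` E c) by exact: measurableI.
have FEfin c : (mu (F `&` E c) < +oo)%E.
  by apply: le_lt_trans Ffin; apply: le_measure; rewrite ?inE//; exact: subIsetl.
rewrite [X in countable X](_ : _ =
    \bigcup_n [set c | (n.+1%:R^-1)%:E < mu (F `&` E c)]%E); last first.
  apply/seteqP; split=> [c/= Hc|c/= [k _]]; last first.
    by apply: lt_trans; rewrite lte_fin invr_gt0.
  have fc : mu (F `&` E c) \is a fin_num.
    by rewrite ge0_fin_numE ?measure_ge0// FEfin.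
  have Hc' : (0 < fine (mu (F `&` E c)))%R by apply: fine_gt0; rewrite Hc FEfin.
  have [k] := ltr_add_invr Hc'; rewrite add0r => kXr.
  exists k => //=; rewrite -(fineK fc) lte_fin //.
apply: bigcup_countable => // n _; apply: finite_set_countable.
apply: contrapT => /infiniteP H.
have /injfunPex[/= q q_fun q_inj] := (pcard_leP H).
have fF : mu F \is a fin_num by rewrite ge0_fin_numE ?measure_ge0.
pose B := Num.bound (fine (mu F)).
have mU : measurable (\bigcup_k (F `&` E (q k))).
  by apply: bigcup_measurable => k _; exact: mFE.
have : (mu (\bigcup_k (F `&` E (q k))) <= mu F)%E.
  by apply: le_measure; rewrite ?inE//; apply: bigcup_sub => k _; exact: subIsetl.
rewrite leNgt => /negP; apply.
rewrite measure_bigcup//; last first.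
  move=> i j _ _ [x [[_ Hi] [_ Hj]]]; apply: q_inj; rewrite ?inE//.
  exact: disj Hi Hj.
apply: (lt_le_trans _ (nneseries_lim_ge (n.+1 * B)%N _)); last first.
  by move=> k _ _; exact: measure_ge0.
under eq_bigl do rewrite in_setT.
rewrite -EFin_sum_fine//; last by move=> ? _; rewrite ge0_fin_numE ?measure_ge0 ?FEfin.
rewrite -(fineK fF) lte_fin.
apply: (@lt_le_trans _ _ (\sum_(0 <= k < n.+1 * B) n.+1%:R^-1)).
  rewrite sumr_const_nat subn0 -(mulr_natr (n.+1%:R^-1) (n.+1 * B)) natrM mulrA.
  rewrite mulVf ?pnatr_eq0// mul1r.
  by apply: archi_boundP; rewrite fine_ge0 ?measure_ge0.
apply: ler_sum => k _.
have := q_fun k I; rewrite /= -(fineK (_ : mu (F `&` E (q k)) \is a fin_num)).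
  by rewrite lte_fin => /ltW.
by rewrite ge0_fin_numE ?measure_ge0 ?FEfin.
Qed.

Lemma preimT d (T : measurableType d) (R : realType) (f : T -> R) (Y : set R) :
  measurable_fun setT f -> measurable Y -> measurable (f @^-1` Y).
Proof. by move=> mf mY; rewrite -[_ @^-1` _]setTI; exact: mf. Qed.
Lemma measE d (T : measurableType d) (R : realType) (phi psi : T -> R) (c : R) :
  measurable_fun setT phi -> measurable_fun setT psi ->
  measurable [set x | psi x != 0 /\ phi x + c * psi x = 0].
Proof.
move=> mphi mpsi.
have -> : [set x | psi x != 0 /\ phi x + c * psi x = 0] =
  psi @^-1` [set~ 0] `&` (fun x => phi x + c * psi x) @^-1` [set 0].
  by apply/seteqP; split => x /= [/eqP H1 H2]; split => //; apply/eqP.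
apply: measurableI; apply: preimT => //.
- exact: measurableC.
- apply: measurable_realfun.measurable_funD => //; exact: measurable_realfun.measurable_funM.
Qed.

Lemma choose_c d (T : measurableType d) (R : realType)
  (mu : {measure set T -> \bar R}) (phi psi : T -> R) :
  sigma_finite setT mu -> measurable_fun setT phi -> measurable_fun setT psi ->
  exists c : R, mu.-negligible [set x | psi x != 0 /\ phi x + c * psi x = 0].
Proof.
move=> [F FT mF] mphi mpsi.
pose E c := [set x | psi x != 0 /\ phi x + c * psi x = 0].
have mE c : measurable (E c) by exact: measE.
have disj c c' x : E c x -> E c' x -> c = c'.
  move=> [p0 e1] [_ e2]; apply: (mulIf p0).
  by apply: (addrI (phi x)); rewrite e1 e2.
have cB : countable (\bigcup_i [set c | (0 < mu (F i `&` E c))%E]).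
  apply: bigcup_countable => // i _.
  by apply: disj_pos_countable => //; case: (mF i).
have [c Hc] := @notin_countable R _ cB.
exists c; rewrite -/(E c).
have -> : E c = \bigcup_i (F i `&` E c).
  by rewrite -setI_bigcupl -FT setTI.
apply: negligible_bigcup => i.
have [mFi _] := mF i.
apply/negligibleP; first exact: measurableI.
apply/eqP; rewrite eq_le measure_ge0 andbT leNgt; apply/negP => H.
by apply: Hc; exists i.
Qed.


Section ae_tools.
Context d (T : measurableType d) (R : realType) (mu : {measure set T -> \bar R}).

Lemma ae_and (P Q : T -> Prop) :
  {ae mu, forall x, P x} -> {ae mu, forall x, Q x} -> {ae mu, forall x, P x /\ Q x}.
Proof. by apply: filterS2 => x. Qed.

Lemma ae_imp (P Q : T -> Prop) :
  (forall x, P x -> Q x) -> {ae mu, forall x, P x} -> {ae mu, forall x, Q x}.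
Proof. by move=> H; apply: filterS. Qed.

Lemma ae_eqP (f g : T -> R) : f = g %[ae mu] -> {ae mu, forall x, f x = g x}.
Proof. by apply: filterS => x; apply. Qed.

Lemma ae_eqP' (f g : T -> R) : {ae mu, forall x, f x = g x} -> f = g %[ae mu].
Proof. by apply: filterS => x. Qed.

Lemma negligible_ae (N : set T) : mu.-negligible N -> {ae mu, forall x, ~ N x}.
Proof.
move=> H; rewrite /almost_everywhere.
by apply: negligibleS H => x /= /contrapT.
Qed.

Lemma supp_aeP (f : T -> R) (A : set T) :
  is_supp mu f A <-> {ae mu, forall x, A x <-> f x != 0}.
Proof.
rewrite /is_supp /ae_set_eq.
suff -> : (A `\` [set x | f x != 0]) `|` ([set x | f x != 0] `\` A) =
  ~` [set x | A x <-> f x != 0] by [].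
apply/seteqP; split => x /=.
- by case=> [[Ax nfx] | [fx nAx]] [H3 H4]; [apply: nfx; exact: H3 | apply: nAx; exact: H4].
- move=> H; case: (pselect (A x)) => Ax.
    by left; split => // fx; apply: H; split.
  by right; split => //; apply: contrapT => fx; apply: H; split.
Qed.

End ae_tools.


Lemma geom_sum (R : realType) (n m : nat) : (n <= m)%N ->
  \sum_(n <= k < m) ((2:R) ^+ k)^-1 = 2 * (2 ^+ n)^-1 - 2 * (2 ^+ m)^-1.
Proof.
elim: m => [|m IH] Hnm.
  by move: Hnm; rewrite leqn0 => /eqP ->; rewrite big_geq // subrr.
move: Hnm; rewrite leq_eqVlt => /orP[/eqP ->|Hlt]; first by rewrite big_geq // subrr.
rewrite big_nat_recr //= IH //.
rewrite exprS invfM mulrA mulfV; last by rewrite pnatr_eq0.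
rewrite mul1r.
rewrite -addrA; congr (_ + _).
by rewrite mulr_natl mulr2n opprD subrK.
Qed.

Lemma geom_le (R : realType) (n m : nat) :
  \sum_(n <= k < m) ((2:R) ^+ k)^-1 <= 2 * (2 ^+ n)^-1.
Proof.
have h2 : (0:R) <= 2 by apply: ler0n.
have p0 : (0:R) <= 2 * (2 ^+ n)^-1.
  apply: mulr_ge0; first exact: h2.
  rewrite invr_ge0; exact: exprn_ge0.
case: (leqP n m) => H; last by rewrite big_geq; [exact: p0| exact: ltnW].
rewrite geom_sum; last exact: H.
rewrite lerBlDr lerDl; apply: mulr_ge0; first exact: h2.
rewrite invr_ge0; exact: exprn_ge0.
Qed.

Lemma pow_small (R : realType) (e : R) : 0 < e -> exists N, 2 * ((2:R) ^+ N)^-1 < e.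
Proof.
move=> e0; exists (Num.bound (2 / e)).
set N := Num.bound (2 / e).
have h2 : (0:R) <= 2 by apply: ler0n.
have h1 : 2 / e < N%:R by apply: archi_boundP; apply: divr_ge0; [exact: h2|exact: ltW].
have h3 : (N%:R : R) <= 2 ^+ N.
  rewrite -natrX ler_nat; apply: ltnW; exact: ltn_expl.
have p0 : (0 : R) < 2 ^+ N by apply: exprn_gt0; apply: ltr0n.
rewrite -(ltr_pM2r p0) mulrAC -mulrA (divff (lt0r_neq0 p0)).
rewrite mulr1.
rewrite -(ltr_pM2r e0) mulrAC -mulrA (divff (lt0r_neq0 e0)) in h1.
rewrite mulr1 in h1.
apply: lt_le_trans h1 _.
by rewrite [X in _ <= X]mulrC (ler_pM2r e0).
Qed.

Lemma pow_anti (R : realType) (N n : nat) : (N <= n)%N ->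
  2 * ((2:R)^+n)^-1 <= 2 * (2^+N)^-1.
Proof.
move=> H.
have t0 : (0:R) < 2 by apply: ltr0n.
have t1 : (1:R) < 2 by rewrite ltr1n.
rewrite (ler_pM2l t0) lef_pV2; last 2 first.
- by rewrite posrE; apply: exprn_gt0.
- by rewrite posrE; apply: exprn_gt0.
by rewrite (ler_eXn2l t1).
Qed.


Section lattice.
Context d (Om : measurableType d) (R : realType) (mu : {measure set Om -> \bar R})
  (X : set (Om -> R)) (nrm : (Om -> R) -> R) (HB : BanachFunctionLattice mu X nrm).

Lemma Xopp f : X f -> X (fun x => - f x).
Proof.
move=> Xf; have := bfl_scale HB (-1) Xf.
by congr X; apply/funext => x; rewrite mulN1r.
Qed.

Lemma Xsub f g : X f -> X g -> X (fun x => f x - g x).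
Proof. by move=> Xf Xg; apply: (bfl_add HB Xf); exact: Xopp. Qed.

Lemma Xabs f : X f -> X (fun x => `|f x|).
Proof.
move=> Xf; have := bfl_max HB Xf (Xopp Xf).
by congr X; apply/funext => x; rewrite maxrN.
Qed.

Lemma nrm0 : nrm (fun _ => 0) = 0.
Proof. by apply/(bfl_nrm_def HB (bfl_zero HB)); exact: aeW. Qed.

Lemma nrm_ge0 f : X f -> 0 <= nrm f.
Proof.
move=> Xf; have := bfl_nrm_triangle HB Xf (bfl_scale HB (-1) Xf).
rewrite (bfl_nrm_scale HB) // normrN normr1 mul1r.
have -> : (fun x => f x + -1 * f x) = (fun _ => 0).
  by apply/funext => x; rewrite mulN1r subrr.
by rewrite nrm0 -mulr2n -mulr_natr pmulr_lge0.
Qed.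

Lemma nrm_opp f : X f -> nrm (fun x => - f x) = nrm f.
Proof.
move=> Xf; have := bfl_nrm_scale HB (-1) Xf; move=> H; rewrite normrN normr1 mul1r in H; rewrite -H.
by congr nrm; apply/funext => x; rewrite mulN1r.
Qed.

Lemma nrm_subC f g : X f -> X g -> nrm (fun x => f x - g x) = nrm (fun x => g x - f x).
Proof.
move=> Xf Xg; rewrite -(nrm_opp (Xsub Xg Xf)).
by congr nrm; apply/funext => x; rewrite opprB.
Qed.

Lemma nrm_abs f : X f -> nrm (fun x => `|f x|) = nrm f.
Proof.
move=> Xf; apply/eqP; rewrite eq_le; apply/andP; split;
  apply: (bfl_nrm_lattice HB) => //; try exact: Xabs;
  by apply: aeW => x; rewrite normr_id.
Qed.

Lemma nrm_le_ae f g : X f -> X g -> (forall x, `|f x| <= `|g x|) -> nrm f <= nrm g.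
Proof. by move=> Xf Xg H; apply: (bfl_nrm_lattice HB) => //; exact: aeW. Qed.

Lemma Xsum (u : nat -> Om -> R) m n : (forall k, X (u k)) ->
  X (fun x => \sum_(m <= k < n) u k x).
Proof.
move=> Xu; elim: n => [|n IH].
  have -> : (fun x => \sum_(m <= k < 0) u k x) = (fun _ => 0).
    by apply/funext => x; rewrite big_geq.
  exact: (bfl_zero HB).
case: (leqP m n) => mn.
  have -> : (fun x => \sum_(m <= k < n.+1) u k x) = (fun x => \sum_(m <= k < n) u k x + u n x).
    by apply/funext => x; rewrite big_nat_recr.
  exact: (bfl_add HB).
have -> : (fun x => \sum_(m <= k < n.+1) u k x) = (fun _ => 0).
  by apply/funext => x; rewrite big_geq.
exact: (bfl_zero HB).
Qed.

Lemma nrm_sum (u : nat -> Om -> R) m n : (forall k, X (u k)) ->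
  nrm (fun x => \sum_(m <= k < n) u k x) <= \sum_(m <= k < n) nrm (u k).
Proof.
move=> Xu; elim: n => [|n IH].
  have -> : (fun x => \sum_(m <= k < 0) u k x) = (fun _ => 0).
    by apply/funext => x; rewrite big_geq.
  by rewrite nrm0 big_geq.
case: (leqP m n) => mn.
  have -> : (fun x => \sum_(m <= k < n.+1) u k x) = (fun x => \sum_(m <= k < n) u k x + u n x).
    by apply/funext => x; rewrite big_nat_recr.
  rewrite big_nat_recr //=.
  apply: le_trans (bfl_nrm_triangle HB (Xsum m n Xu) (Xu n)) _.
  exact: lerD.
have -> : (fun x => \sum_(m <= k < n.+1) u k x) = (fun _ => 0).
  by apply/funext => x; rewrite big_geq.
by rewrite nrm0 big_geq.
Qed.

End lattice.


Section series.
Context d (Om : measurableType d) (R : realType) (mu : {measure set Om -> \bar R})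
  (X : set (Om -> R)) (nrm : (Om -> R) -> R) (HB : BanachFunctionLattice mu X nrm).

Lemma series_conv (u : nat -> Om -> R) : (forall k, X (u k)) ->
  (forall k, nrm (u k) <= ((2:R) ^+ k)^-1) ->
  exists2 F, X F & forall e : R, 0 < e -> exists N, forall n, (N <= n)%N ->
    nrm (fun x => \sum_(0 <= k < n) u k x - F x) < e.
Proof.
move=> Xu nu.
have XS n : X (fun x => \sum_(0 <= k < n) u k x) by exact: (Xsum HB).
have key n m : (n <= m)%N ->
    nrm (fun x => \sum_(0 <= k < m) u k x - \sum_(0 <= k < n) u k x) <= 2 * ((2:R)^+n)^-1.
  move=> nm.
  have -> : (fun x => \sum_(0 <= k < m) u k x - \sum_(0 <= k < n) u k x) =
      (fun x => \sum_(n <= k < m) u k x).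
    apply/funext => x; rewrite (@big_cat_nat _ _ _ n 0 m _ _ (leq0n n) nm) /=.
    by rewrite addrAC subrr add0r.
  apply: le_trans (nrm_sum HB n m Xu) _.
  apply: le_trans (geom_le R n m).
  by apply: ler_sum => k _; exact: nu.
apply: (bfl_complete HB XS) => e e0.
have [N HN] := pow_small e0.
exists N => m n Nm Nn.
case: (leqP n m) => nm.
  apply: le_lt_trans (key _ _ nm) _.
  exact: le_lt_trans (pow_anti R Nn) HN.
rewrite (nrm_subC HB (XS m) (XS n)).
apply: le_lt_trans (key _ _ (ltnW nm)) _.
exact: le_lt_trans (pow_anti R Nm) HN.
Qed.

Lemma abs_series_bdd (u : nat -> Om -> R) : (forall k, X (u k)) ->
  (forall k, nrm (u k) <= ((2:R) ^+ k)^-1) ->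
  {ae mu, forall x, exists M : R, forall n, \sum_(0 <= k < n) `|u k x| <= M}.
Proof.
move=> Xu nu.
pose v k := fun x => `|u k x|.
have Xv k : X (v k) by exact: (Xabs HB).
have nv k : nrm (v k) <= ((2:R) ^+ k)^-1 by rewrite /v (nrm_abs HB (Xu k)).
have [F XF HF] := series_conv Xv nv.
pose S n := fun x => \sum_(0 <= k < n) v k x.
have XS n : X (S n) by exact: (Xsum HB).
have Smono N M x : (N <= M)%N -> S N x <= S M x.
  move=> NM; rewrite /S (@big_cat_nat _ _ _ N 0 M _ _ (leq0n N) NM) /=.
  by apply: ler_wpDr; [apply: sumr_ge0 => k _; exact: normr_ge0|exact: lexx].
have claim N : {ae mu, forall x, S N x <= F x}.
  pose P := fun x => Num.max (S N x - F x) 0.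
  have XP : X P by apply: (bfl_max HB); [exact: (Xsub HB)|exact: (bfl_zero HB)].
  have P0 : nrm P = 0.
    apply/eqP; rewrite eq_le (nrm_ge0 HB XP) andbT leNgt; apply/negP => Hp.
    have [N' HN'] := HF _ Hp.
    have := HN' (maxn N N') (leq_maxr N N').
    apply/negP; rewrite -leNgt.
    apply: (nrm_le_ae HB XP (Xsub HB (XS _) XF)) => x.
    have P0 : 0 <= P x by rewrite /P le_max lexx orbT.
    rewrite (ger0_norm P0) /P ge_max normr_ge0 andbT.
    apply: le_trans (ler_norm _); rewrite lerD2r.
    exact: Smono (leq_maxl N N').
  have := (bfl_nrm_def HB XP).1 P0.
  apply: filterS => x /(_ I); rewrite /P => H.
  have : S N x - F x <= 0 by rewrite -H le_max lexx.
  by rewrite subr_le0.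
have := ae_foralln claim.
apply: filterS => x H; exists (F x) => n; exact: H.
Qed.

End series.


Lemma sum_zero (R : realType) (a : nat -> R) n : (forall j, (j < n)%N -> a j = 0) ->
  \sum_(0 <= j < n) a j = 0.
Proof.
move=> H; rewrite big_nat_cond big1 // => j /andP[/andP[_ jn] _]; exact: H.
Qed.

Lemma sum_single (R : realType) (a : nat -> R) k n : (forall j, j <> k -> a j = 0) ->
  (k < n)%N -> \sum_(0 <= j < n) a j = a k.
Proof.
move=> H; elim: n => [//|n IH] kn.
rewrite big_nat_recr //=.
move: kn; rewrite ltnS leq_eqVlt => /orP[/eqP kn|kn].
  subst k; rewrite sum_zero ?add0r //.
  by move=> j jn; apply: H => e; move: jn; rewrite e ltnn.
rewrite IH // (H n) ?addr0 // => e; move: kn; rewrite e ltnn.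
by [].
Qed.

Lemma pointwise (R : realType) (s : nat -> R) (b : R) (m : nat) (nk : nat -> nat) (M : R) :
  (forall k, (k <= nk k)%N) -> (forall n, (m <= n)%N -> s n = b) ->
  (forall K, \sum_(0 <= k < K) `|s (nk k)| <= M) -> b = 0.
Proof.
move=> Hnk Hs HM.
have M0 : 0 <= M by have := HM 0%N; rewrite big_geq.
case: (eqVneq b 0) => // b0; exfalso.
have nb : 0 < `|b| by rewrite normr_gt0.
pose B := Num.bound (M / `|b|).
have HB : M / `|b| < B%:R by apply: archi_boundP; apply: divr_ge0 => //; exact: ltW.
have := HM (m + B)%N; rewrite leNgt => /negP; apply.
rewrite (@big_cat_nat _ _ _ m 0 (m + B) _ _ (leq0n m) (leq_addr B m)) /=.
apply: (@lt_le_trans _ _ (\sum_(m <= k < m + B) `|s (nk k)|)); last first.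
  by apply: ler_wpDl; [apply: sumr_ge0 => k _; exact: normr_ge0|exact: lexx].
rewrite (@eq_big_nat _ _ _ m (m + B) _ (fun _ => `|b|)); last first.
  move=> i /andP[mi _]; rewrite Hs //; exact: leq_trans mi (Hnk i).
rewrite sumr_const_nat addKn -mulr_natr.
by rewrite mulrC -ltr_pdivrMr.
Qed.


Section op.
Context d (Om : measurableType d) (R : realType) (mu : {measure set Om -> \bar R})
  (X : set (Om -> R)) (nrm : (Om -> R) -> R) (Op : (Om -> R) -> (Om -> R))
  (HB : BanachFunctionLattice mu X nrm) (HT : bounded_linear_op mu X nrm Op).

Lemma TX f : X f -> X (Op f).
Proof. by case: HT => H _ _ _ _; exact: H. Qed.

Lemma Tadd f g : X f -> X g ->
  {ae mu, forall x, Op (fun x => f x + g x) x = Op f x + Op g x}.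
Proof. by case: HT => _ _ H _ _ Xf Xg; apply: filterS (H f g Xf Xg) => x; apply. Qed.

Lemma Tscale (a : R) f : X f -> {ae mu, forall x, Op (fun x => a * f x) x = a * Op f x}.
Proof. by case: HT => _ _ _ H _ Xf; apply: filterS (H a f Xf) => x; apply. Qed.

Lemma Tzero : {ae mu, forall x, Op (fun _ => 0) x = 0}.
Proof.
have := Tscale 0 (bfl_zero HB).
have -> : (fun x : Om => (0 : R) * 0) = (fun _ => 0) by apply/funext => x; rewrite mul0r.
by apply: filterS => x ->; rewrite mul0r.
Qed.

Lemma Tsub f g : X f -> X g ->
  {ae mu, forall x, Op (fun x => f x - g x) x = Op f x - Op g x}.
Proof.
move=> Xf Xg.
have X1 : X (fun x => -1 * g x) by exact: (bfl_scale HB).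
have := ae_and (Tadd Xf X1) (Tscale (-1) Xg).
have -> : (fun x => f x - g x) = (fun x => f x + -1 * g x).
  by apply/funext => x; rewrite mulN1r.
by apply: filterS => x [-> ->]; rewrite mulN1r.
Qed.

Lemma Tsum (g : nat -> Om -> R) n : (forall j, X (g j)) ->
  {ae mu, forall x, Op (fun x => \sum_(0 <= j < n) g j x) x = \sum_(0 <= j < n) Op (g j) x}.
Proof.
move=> Xg; elim: n => [|n IH].
  have -> : (fun x => \sum_(0 <= j < 0) g j x) = (fun _ => 0).
    by apply/funext => x; rewrite big_geq.
  by apply: filterS Tzero => x ->; rewrite big_geq.
have -> : (fun x => \sum_(0 <= j < n.+1) g j x) = (fun x => \sum_(0 <= j < n) g j x + g n x).
  by apply/funext => x; rewrite big_nat_recr.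
have := ae_and IH (Tadd (Xsum HB 0 n Xg) (Xg n)).
by apply: filterS => x [H1 ->]; rewrite H1 big_nat_recr.
Qed.

Lemma part1 : sigma_finite setT mu -> forall A B,
  SigmaT mu X Op A -> SigmaT mu X Op B -> SigmaT mu X Op (A `|` B).
Proof.
move=> sf A B [f Xf Hf] [g Xg Hg].
have mphi := bfl_meas HB (TX Xf).
have mpsi := bfl_meas HB (TX Xg).
have [c Hc] := choose_c sf mphi mpsi.
have Xcg : X (fun x => c * g x) by exact: (bfl_scale HB).
exists (fun x => f x + c * g x); first exact: (bfl_add HB).
apply/supp_aeP.
move/supp_aeP: Hf => Hf; move/supp_aeP: Hg => Hg.
have := ae_and (ae_and (ae_and (ae_and Hf Hg) (Tadd Xf Xcg)) (Tscale c Xg))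
  (negligible_ae Hc).
apply: filterS => x [[[[H1 H2] -> ->] H5]].
split.
- move=> AB; apply/negP => /eqP H0.
  have g0 : Op g x = 0.
    apply: contrapT => /eqP g0; apply: H5; split => //.
  have f0 : Op f x = 0 by move: H0; rewrite g0 mulr0 addr0.
  case: AB => [/H1|/H2]; [rewrite f0|rewrite g0]; by rewrite eqxx.
- move=> H0; case: (eqVneq (Op f x) 0) => f0; last by left; apply/H1.
  right; apply/H2; apply: contraNneq H0 => g0.
  by rewrite f0 g0 mulr0 addr0.
Qed.

Lemma part2 : forall A : nat -> set Om, (forall j, SigmaT mu X Op (A j)) ->
  (forall i j, i <> j -> ae_disjoint mu (A i) (A j)) ->
  SigmaT mu X Op (\bigcup_j A j).
Proof.
move=> A HA Hdisj.
have HA' : forall j, exists f, X f /\ is_supp mu (Op f) (A j).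
  by move=> j; case: (HA j) => f Xf Sf; exists f.
have [f Hf] := choice HA'.
have Xf j : X (f j) by case: (Hf j).
have Sf j : {ae mu, forall x, A j x <-> Op (f j) x != 0}.
  by case: (Hf j) => _ /supp_aeP.
pose c j := (((2:R) ^+ j) * (1 + nrm (f j)))^-1.
have n0 j : 0 <= nrm (f j) by exact: (nrm_ge0 HB).
have c0 j : 0 < c j.
  rewrite /c invr_gt0; apply: mulr_gt0; first by apply: exprn_gt0; apply: ltr0n.
  by apply: ltr_wpDr; [exact: n0|exact: ltr01].
pose g j := fun x => c j * f j x.
have Xg j : X (g j) by exact: (bfl_scale HB).
have ng j : nrm (g j) <= ((2:R) ^+ j)^-1.
  rewrite /g (bfl_nrm_scale HB _ (Xf j)) (gtr0_norm (c0 j)) /c invfM -mulrA.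
  apply: ler_piMr; first by rewrite invr_ge0; apply: exprn_ge0; apply: ler0n.
  rewrite mulrC ler_pdivrMr ?mul1r; last by apply: ltr_wpDr; [exact: n0|exact: ltr01].
  by apply: ler_wpDl; [exact: ler01|exact: lexx].
have [h Xh Hh] := series_conv HB Xg ng.
pose S n := fun x => \sum_(0 <= k < n) g k x.
have XS n : X (S n) by exact: (Xsum HB).
pose u n := Op (fun x => h x - S n x).
have Xu n : X (u n) by apply: TX; exact: (Xsub HB).
have [C HC] : exists C : R, forall f, X f -> nrm (Op f) <= C * nrm f.
  by case: HT.
have small k : exists n, (k <= n)%N /\ nrm (u n) <= ((2:R) ^+ k)^-1.
  pose e := ((2:R) ^+ k)^-1 / (`|C| + 1).
  have C1 : 0 < `|C| + 1 by apply: ltr_wpDl; [exact: normr_ge0|exact: ltr01].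
  have p0 : 0 < ((2:R) ^+ k)^-1.
    by rewrite invr_gt0; apply: exprn_gt0; apply: ltr0n.
  have e0 : 0 < e by apply: divr_gt0.
  have [N HN] := Hh e e0.
  exists (maxn N k); split; first exact: leq_maxr.
  have H1 := HN (maxn N k) (leq_maxl N k).
  rewrite (nrm_subC HB (XS _) Xh) in H1.
  have Xd : X (fun x => h x - S (maxn N k) x) by exact: (Xsub HB).
  apply: le_trans (HC _ Xd) _.
  apply: le_trans (ler_wpM2r (nrm_ge0 HB Xd) (ler_norm C)) _.
  apply: le_trans (ler_wpM2l (normr_ge0 C) (ltW H1)) _.
  rewrite /e mulrCA; apply: ler_piMr; first exact: ltW.
  by rewrite ler_pdivrMr // mul1r lerDl ler01.
have [nk Hnk] := choice small.
pose w k := u (nk k).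
have Xw k : X (w k) by exact: Xu.
have nw k : nrm (w k) <= ((2:R) ^+ k)^-1 by case: (Hnk k).
have Bd := abs_series_bdd HB Xw nw.
have F1 := ae_foralln Sf.
have F2 : {ae mu, forall x, forall i j, i <> j -> ~ (A i x /\ A j x)}.
  apply: ae_foralln => i; apply: ae_foralln => j.
  case: (eqVneq i j) => [->|ij]; first by apply: aeW => x; exact.
  have := negligible_ae (Hdisj i j (elimN eqP ij)).
  by apply: filterS => x H _.
have F3 := ae_foralln (fun n => Tsum n Xg).
have F4 := ae_foralln (fun j => Tscale (c j) (Xf j)).
have F5 := ae_foralln (fun n => Tsub Xh (XS n)).
exists h => //.
apply/supp_aeP.
have := ae_and (ae_and (ae_and (ae_and (ae_and F1 F2) F3) F4) F5) Bd.
apply: filterS => x [[[[[H1 H2] H3] H4] H5] [M HM]].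
have un n : u n x = Op h x - \sum_(0 <= j < n) c j * Op (f j) x.
  rewrite /u H5 H3; congr (_ - _); apply: eq_bigr => j _; exact: H4.
have HMw K : \sum_(0 <= k < K) `|(fun n => u n x) (nk k)| <= M by exact: HM.
have nkk k : (k <= nk k)%N by case: (Hnk k).
case: (pselect (exists k, A k x)) => [[k Ak]|nA].
  have z j : j <> k -> c j * Op (f j) x = 0.
    move=> jk; have : ~ A j x by move=> Aj; exact: (H2 j k jk).
    by move/H1 => /negP; rewrite negbK => /eqP ->; rewrite mulr0.
  have := @pointwise R (fun n => u n x) (Op h x - c k * Op (f k) x) k.+1 nk M nkk.
  move=> P; have := P _ HMw.
  have P0 : forall n, (k.+1 <= n)%N -> u n x = Op h x - c k * Op (f k) x.
    by move=> n kn; rewrite un (sum_single z kn).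
  move=> /(_ P0) /eqP; rewrite subr_eq0 => /eqP ->.
  split=> _; last by exists k.
  by apply: mulf_neq0; [exact: lt0r_neq0|exact/H1].
have z j : c j * Op (f j) x = 0.
  have : ~ A j x by move=> Aj; apply: nA; exists j.
  by move/H1 => /negP; rewrite negbK => /eqP ->; rewrite mulr0.
have P0 : forall n, (0 <= n)%N -> u n x = Op h x.
  by move=> n _; rewrite un sum_zero ?subr0.
have := pointwise nkk P0 HMw => ->.
split; last by rewrite eqxx.
by case=> j _ Aj; exfalso; apply: nA; exists j.
Qed.

End op.

Theorem lemma4p1 (d : measure_display) (Om : measurableType d) (R : realType)
  (mu : {measure set Om -> \bar R}) (X : set (Om -> R)) (nrm : (Om -> R) -> R)
  (Op : (Om -> R) -> (Om -> R)) :
  sigma_finite setT mu ->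
  BanachFunctionLattice mu X nrm ->
  bounded_linear_op mu X nrm Op ->
  (forall A B, SigmaT mu X Op A -> SigmaT mu X Op B -> SigmaT mu X Op (A `|` B)) /\
  (forall A : nat -> set Om, (forall j, SigmaT mu X Op (A j)) ->
     (forall i j, i <> j -> ae_disjoint mu (A i) (A j)) ->
     SigmaT mu X Op (\bigcup_j A j)).
Proof.
move=> sf HB HT; split.
- exact: (part1 HB HT sf).
- exact: (part2 HB HT).
Qed.
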